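(* Let $r,s\ge 1$ and let $A=(A_{ij})_{i,j=1}^r$ be an $rs\times rs$ matrix with non-negative entries, written in $s\times s$ blocks $A_{ij}$, which is a disoriented $(r,s)$-block circulant matrix. Suppose that \[ \left( \sum_{j=1}^r A_{1j} \right) \mathbf{J}_s = \mathbf{J}_s \left( \sum_{j=1}^r A_{1j} \right). \] Then $\rho(A) = \rho\left(\sum_{j=1}^r A_{1j} \right)$.
   Context: $\rho(M)$ denotes the spectral radius of a square matrix $M$. $\mathbf{J}_s$ denotes the $s\times s$ $(0,1)$-matrix with ones exactly on the anti-diagonal. An $(r,s)$-block circulant matrix is an $rs\times rs$ matrix in $s\times s$ blocks of the form whose first block row is $(B_1\ B_2\ \dots\ B_r)$ and whose $i$-th block row is the first block row cyclically shifted $i-1$ places to the right (so block $(i,j)$ is $B_{[j-i+1]_r}$, indices mod $r$ in $\{1,\dots,r\}$). An $(r,s)$-disoriented block circulant matrix is a block matrix $A=(A_{ij})_{i,j=1}^r$ with $s\times s$ blocks for which there is an $(r,s)$-block circulant matrix $\widetilde A=(\widetilde A_{ij})$ with the same first block row ($\widetilde A_{1j}=A_{1j}$ for all $j$) such that for each $i\in\{2,\dots,r\}$ either $A_{ij}=\widetilde A_{ij}$ for all $j=1,\dots,r$, or $A_{ij}=\mathbf{J}_s\widetilde A_{ij}$ for all $j=1,\dots,r$. *)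

(* Defs.v *)
From HB Require Import structures.
From mathcomp Require Import all_boot all_order all_algebra.
From mathcomp Require Import complex.
Set Implicit Arguments. Unset Strict Implicit. Unset Printing Implicit Defensive.
Import Order.TTheory GRing.Theory Num.Theory.
Local Open Scope ring_scope.

Definition Jmat (R : pzRingType) (s : nat) : 'M[R]_s :=
  \matrix_(i < s, j < s) ((i + j == s.-1)%N)%:R.

(* The (i,j) s x s block of an rs x rs matrix (0-based block indices);
   entry (k,l) of block (i,j) is A (i*s+k) (j*s+l). *)
Lemma blk_idx_lt (r s : nat) (i : 'I_r) (k : 'I_s) : (i * s + k < r * s)%N.
Proof.
have Hk := ltn_ord k; have Hi := ltn_ord i.
apply: (@leq_trans (i * s + s)); first by rewrite ltn_add2l.
by rewrite -[X in (_ + X)%N]mul1n -mulnDl addn1 leq_mul2r Hi orbT.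
Qed.

Definition blk_idx (r s : nat) (i : 'I_r) (k : 'I_s) : 'I_(r * s) :=
  Ordinal (blk_idx_lt i k).

Definition blk (R : Type) (r s : nat) (A : 'M[R]_(r * s)) (i j : 'I_r) : 'M[R]_s :=
  \matrix_(k < s, l < s) A (blk_idx i k) (blk_idx j l).

Lemma ord_pos (r : nat) (i : 'I_r) : (0 < r)%N.
Proof. exact: leq_ltn_trans (leq0n i) (ltn_ord i). Qed.

Definition row0 (r : nat) (i : 'I_r) : 'I_r := Ordinal (ord_pos i).

(* In a block circulant matrix, block (i,j) (0-based) is the first-row block
   with 0-based index (j - i) mod r. *)
Definition circ_idx (r : nat) (i j : 'I_r) : 'I_r :=
  Ordinal (ltn_pmod (j + r - i) (ord_pos i)).

(* A is an (r,s)-disoriented block circulant matrix: each block row i >= 2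
   (1-based) is either the corresponding row of the block circulant matrix
   with the same first block row, or J_s times it (blockwise). *)
Definition disoriented_block_circulant (R : pzRingType) (r s : nat)
    (A : 'M[R]_(r * s)) : Prop :=
  exists d : 'I_r -> bool, forall i j : 'I_r, val i != 0%N ->
    blk A i j = (if d i then Jmat R s *m blk A (row0 i) (circ_idx i j)
                 else blk A (row0 i) (circ_idx i j)).

Definition spectral_radius (R : rcfType) (n : nat) (M : 'M[R]_n) : R :=
  let rts := sval (closed_field_poly_normal (char_poly (map_mx (real_complex R) M))) in
  \big[Num.max/0]_(z <- rts) complex.Re `|z|.

(* Main.v *)
Require Import Defs.
From HB Require Import structures.
From mathcomp Require Import all_boot all_order all_algebra.
From mathcomp Require Import complex.
From mathcomp Require Import polyrcf.
From mathcomp Require Import ring lra zify.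
From Stdlib Require Import Classical.
Import Defs.
Import Order.TTheory GRing.Theory Num.Theory.
Local Open Scope ring_scope.

Module Aux.
Set Implicit Arguments. Unset Strict Implicit. Unset Printing Implicit Defensive.

Section PolyAux.
Variable R : rcfType.
Implicit Types (p h : {poly R}).

Lemma poly_le0_right h a : (forall s, a < s -> h.[s] <= 0) -> h.[a] <= 0.
Proof.
move=> H; rewrite leNgt; apply/negP => ha.
have [d d0 Hd] := poly_cont a h ha.
have := Hd (a + d / 2%:R).
rewrite addrAC subrr add0r ger0_norm ?divr_ge0 ?ltW //.
rewrite ltr_pdivrMr ?ltr0n // ltr_pMr // ?ltr1n // => /(_ isT).
have : h.[a + d / 2%:R] <= 0 by apply: H; rewrite ltrDl divr_gt0 ?ltr0n.
move=> hle; rewrite ltr_norml => /andP[+ _].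
lra.
Qed.

Lemma bigmax_in (s : seq R) x0 : \big[Num.max/x0]_(x <- s) x \in x0 :: s.
Proof.
elim: s => [|y s IH]; first by rewrite big_nil mem_head.
rewrite big_cons; set m := \big[_/_]_(_ <- _) _ in IH *.
case: (leP y m) => _.
  by move: IH; rewrite !inE => /orP[->|->]; rewrite ?orbT.
by rewrite !inE eqxx orbT.
Qed.

Lemma monic_largest p s0 : p \is monic -> p.[s0] <= 0 ->
  exists s1, [/\ s0 <= s1, p.[s1] <= 0 & forall s, s1 < s -> 0 < p.[s]].
Proof.
move=> pm ps0; have p0 : p != 0 by apply: monic_neq0.
pose s1 := \big[Num.max/s0]_(x <- rootsR p) x.
have s1ge : forall x, x \in rootsR p -> x <= s1.
  move=> x; rewrite /s1; elim: (rootsR p) => [|y l IH] //.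
  rewrite inE big_cons => /orP[/eqP->|/IH]; first by rewrite le_max lexx.
  by move=> h; rewrite le_max h orbT.
have s0le : s0 <= s1.
  rewrite /s1; elim: (rootsR p) => [|y l IH]; first by rewrite big_nil.
  by rewrite big_cons le_max IH orbT.
exists s1; split => //.
  have := bigmax_in (rootsR p) s0; rewrite -/s1 inE => /orP[/eqP->//|].
  by rewrite -roots_on_rootsR // => /rootP ->.
move=> s hs.
have nr : forall y, s <= y -> ~~ root p y.
  move=> y hy; apply/negP => ry.
  have : y \in rootsR p by rewrite -roots_on_rootsR.
  by move/s1ge => h1; have := lt_le_trans hs hy; rewrite ltNge h1.
rewrite ltNge; apply/negP => hps.
have lc : 0 < lead_coef p by rewrite (monicP pm) ltr01.
have [N HN] := poly_pinfty_gt_lc lc.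
have hN : p.[Num.max N s] >= 1 by rewrite -(monicP pm); apply: HN; rewrite le_max lexx.
have h1 : s <= Num.max N s by rewrite le_max lexx orbT.
have h2 : p.[s] <= 0 <= p.[Num.max N s] by rewrite hps (le_trans ler01 hN).
have [y /andP[hy _] ry] := poly_ivt h1 h2.
by move: (nr y) ; rewrite ry hy => /(_ isT).
Qed.

End PolyAux.

Lemma char_poly_horner (R : comNzRingType) n (A : 'M[R]_n) a :
  (char_poly A).[a] = \det (a%:M - A).
Proof.
rewrite /char_poly -[LHS]/(horner_eval a _) -det_map_mx; congr (\det _).
apply/matrixP => i j; rewrite !mxE /horner_eval /=.
by rewrite horner_evalE hornerD hornerN hornerMn hornerX hornerC.
Qed.

Lemma det_border (R : comUnitRingType) m (a : R) (u : 'M[R]_(1,m)) (v : 'M_(m,1)) (M : 'M_m) :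
  M \in unitmx ->
  \det (block_mx a%:M u v M) = (a - (u *m invmx M *m v) 0 0) * \det M.
Proof.
move=> uM.
have E : block_mx a%:M u v M *m block_mx 1%:M 0 (- (invmx M *m v)) 1%:M
   = block_mx (a - (u *m invmx M *m v) 0 0)%:M u 0 M.
  rewrite mulmx_block !mulmx0 !mulmx1 !add0r.
  rewrite !mulmxN mulKVmx // mulmxA subrr.
  rewrite (raddfB (@scalar_mx _ 1)) /=.
  have H := mx11_scalar (u *m invmx M *m v). by rewrite -H.
have := congr1 determinant E; rewrite det_mulmx det_lblock !det1 mulr1.
by rewrite mulr1 det_ublock det_mx11 mxE /= mulr1n => ->.
Qed.

Section IPsec.
Variable R : rcfType.

Definition nnegmx m n (M : 'M[R]_(m,n)) := forall i j, 0 <= M i j.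

Lemma nnegmx_mul m n p (A : 'M[R]_(m,n)) (B : 'M[R]_(n,p)) :
  nnegmx A -> nnegmx B -> nnegmx (A *m B).
Proof. by move=> hA hB i j; rewrite mxE sumr_ge0 // => l _; rewrite mulr_ge0. Qed.

Lemma nnegmx_add m n (A B : 'M[R]_(m,n)) : nnegmx A -> nnegmx B -> nnegmx (A + B).
Proof. by move=> hA hB i j; rewrite mxE addr_ge0. Qed.

Lemma nnegmx_colmx m1 m2 k (x : 'M[R]_(m1 + m2, k)) :
  nnegmx (usubmx x) -> nnegmx (dsubmx x) -> nnegmx x.
Proof.
rewrite -[x]vsubmxK => hu hd i j; case: (split_ordP i) => i' ->.
  by rewrite col_mxEu; have := hu i' j; rewrite col_mxKu.
by rewrite col_mxEd; have := hd i' j; rewrite col_mxKd.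
Qed.

Lemma nnegmx1 n : nnegmx (1%:M : 'M[R]_n).
Proof. by move=> i j; rewrite mxE ler0n. Qed.

Lemma IP n (B : 'M[R]_n) t k (x : 'M[R]_(n,k)) :
  nnegmx B -> (forall s, t <= s -> 0 < \det (s%:M - B)) ->
  nnegmx ((t%:M - B) *m x) -> nnegmx x.
Proof.
elim: n B t k x => [|m IH] B t k x B0 Hdet Hy; first by move=> i; case: i.
pose B1 : 'M[R]_(1 + m) := B.
pose b := ulsubmx B1 0 0; pose u := ursubmx B1; pose v := dlsubmx B1.
pose B' := drsubmx B1.
have EB : B1 = block_mx b%:M u v B' by rewrite -mx11_scalar submxK.
have Es : forall s, (s%:M - B1) = block_mx (s - b)%:M (- u) (- v) (s%:M - B').
  move=> s; rewrite EB (scalar_mx_block 1 m s) opp_block_mx add_block_mx.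
  rewrite (raddfB (@scalar_mx _ 1)).
  by rewrite !sub0r.
have u0 : nnegmx u by move=> i j; rewrite /u !mxE; exact (B0 _ _).
have v0 : nnegmx v by move=> i j; rewrite /v !mxE; exact (B0 _ _).
have B'0 : nnegmx B' by move=> i j; rewrite /B' !mxE; exact (B0 _ _).
have b0 : 0 <= b by rewrite /b !mxE; exact (B0 _ _).
have sub : forall s, (forall s', s <= s' -> 0 < \det (s'%:M - B')) ->
    [/\ (s%:M - B') \in unitmx, nnegmx (invmx (s%:M - B')),
     0 <= (u *m invmx (s%:M - B') *m v) 0 0 &
     \det (s%:M - B) = (s - b - (u *m invmx (s%:M - B') *m v) 0 0) * \det (s%:M - B')].
  move=> s Hs; have uM : (s%:M - B') \in unitmx.
    by rewrite unitmxE unitfE gt_eqF // Hs.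
  have G0 : nnegmx (invmx (s%:M - B')).
    apply: (IH B' s) => //; by rewrite mulmxV //; apply: nnegmx1.
  split => //; first by apply: nnegmx_mul => //; apply: nnegmx_mul.
  rewrite -[s%:M - B]/(s%:M - B1) Es det_border //.
  by rewrite !mulNmx mulmxN opprK.
have D0 : forall s, t <= s -> 0 < \det (s%:M - B').
  move=> s0 hs0; rewrite ltNge; apply/negP => hle.
  have [s1 [hs01 hp1 hpos]] := monic_largest (char_poly_monic B') (p := char_poly B') (s0 := s0)
     ltac:(by rewrite char_poly_horner).
  have key : forall s, s1 < s ->
      (char_poly B - ('X - b%:P) * char_poly B').[s] <= 0.
    move=> s hs.
    have Hs : forall s', s <= s' -> 0 < \det (s'%:M - B').
      by move=> s' hs'; rewrite -char_poly_horner hpos // (lt_le_trans hs hs').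
    rewrite hornerD hornerN hornerM hornerD hornerN hornerX hornerC !char_poly_horner.
    have [_ _ c0 ->] := sub s Hs.
    rewrite subr_le0 ler_pM2r ?(Hs s) // lerBlDr lerDl //.
  have h1 := poly_le0_right key.
  have h2 : (- char_poly B').[s1] <= 0.
    by apply: poly_le0_right => s hs; rewrite hornerN oppr_le0 ltW // hpos.
  have e1 : (char_poly B').[s1] = 0.
    by apply/le_anti; rewrite hp1 -oppr_le0 -hornerN h2.
  move: h1; rewrite hornerD hornerN hornerM e1 mulr0 subr0 char_poly_horner.
  by rewrite leNgt Hdet // (le_trans hs0 hs01).
have [uM G0 c0 Ed] := sub t (fun s hs => D0 s hs).
set G := invmx (t%:M - B') in uM G0 c0 Ed.
set c := (u *m G *m v) 0 0 in c0 Ed.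
have sg : 0 < t - b - c.
  have := Hdet t (lexx _); rewrite Ed.
  by rewrite pmulr_lgt0 // D0.
pose x1 : 'M_(1 + m, k) := x.
have Hy' : nnegmx (@mulmx _ (1 + m) (1 + m) k (t%:M - B1) x1) by exact Hy.
suff : nnegmx x1 by [].
move: Hy'; rewrite -[x1]vsubmxK Es mul_block_col.
set x0 := usubmx x1; set x2 := dsubmx x1.
set Y0 := _ + _ *m x2; set Y1 := _ + _ *m x2 => Hz.
have hY0 : nnegmx Y0 by move=> i j; have := Hz (lshift m i) j; rewrite col_mxEu.
have hY1 : nnegmx Y1 by move=> i j; have := Hz (rshift 1 i) j; rewrite col_mxEd.
have Ex2 : x2 = G *m (Y1 + v *m x0).
  by rewrite /Y1 mulNmx addrC addrA subrr add0r mulKmx.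
have Ex0 : (t - b - c) *: x0 = Y0 + u *m G *m Y1.
  have : Y0 = (t - b) *: x0 - u *m x2 by rewrite /Y0 mul_scalar_mx mulNmx.
  rewrite Ex2 mulmxDr !mulmxA => ->.
  rewrite mulmxDr !mulmxA [u *m G *m v]mx11_scalar mul_scalar_mx -/c.
  set W := u *m G *m Y1.
  by apply/matrixP => i j; rewrite !mxE; ring.
have hx0 : nnegmx x0.
  move=> i j; have := congr1 (fun M : 'M[R]_(1,k) => M i j) Ex0; rewrite /= mxE => E.
  have : 0 <= (t - b - c) * x0 i j by rewrite E; apply: nnegmx_add => //; 
    apply: nnegmx_mul => //; apply: nnegmx_mul.
  by rewrite pmulr_rge0.
have hx2 : nnegmx x2 by rewrite Ex2; apply: nnegmx_mul => //;
  apply: nnegmx_add => //; apply: nnegmx_mul.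
by move=> i j; case: (split_ordP i) => i' ->; [rewrite col_mxEu | rewrite col_mxEd].
Qed.

End IPsec.

Section Lsec.
Variable R : rcfType.

Lemma subinv_col n (B : 'M[R]_n) (p : 'cV[R]_n) c :
  nnegmx B -> nnegmx p -> p != 0 -> (forall i, c * p i 0 <= (B *m p) i 0) ->
  exists t, c <= t /\ \det (t%:M - B) = 0.
Proof.
move=> B0 p0 pn0 Hp.
apply: NNPP => Hno.
have Hpos : forall s, c <= s -> 0 < \det (s%:M - B).
  move=> s hs; rewrite ltNge; apply/negP => hle.
  have [s1 [hs1 hp1 hpos]] := monic_largest (char_poly_monic B) (p := char_poly B) (s0 := s)
     ltac:(by rewrite char_poly_horner).
  have h2 : (- char_poly B).[s1] <= 0.
    by apply: poly_le0_right => s' hs'; rewrite hornerN oppr_le0 ltW // hpos.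
  apply: Hno; exists s1; split; first exact: le_trans hs hs1.
  rewrite -char_poly_horner; apply/le_anti; rewrite hp1.
  by rewrite -oppr_le0 -hornerN h2.
have := @IP R n B c 1 (- p) B0 Hpos.
have hy : nnegmx ((c%:M - B) *m - p).
  move=> i j; rewrite (ord1 j) mulmxN mulmxBl mul_scalar_mx opprB !mxE.
  by rewrite subr_ge0; have := Hp i; rewrite mxE.
move=> /(_ hy) hn; move/negP: pn0; apply; apply/eqP/matrixP => i j.
rewrite (ord1 j) mxE; apply/le_anti; rewrite p0 andbT.
by have := hn i 0; rewrite mxE oppr_ge0.
Qed.

Lemma subinv_row n (B : 'M[R]_n) (p : 'rV[R]_n) c :
  nnegmx B -> nnegmx p -> p != 0 -> (forall i, c * p 0 i <= (p *m B) 0 i) ->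
  exists t, c <= t /\ \det (t%:M - B) = 0.
Proof.
move=> B0 p0 pn0 Hp.
have h1 : nnegmx B^T by move=> i j; rewrite mxE.
have h2 : nnegmx p^T by move=> i j; rewrite mxE.
have h3 : p^T != 0 by rewrite trmx_eq0.
have h4 : forall i, c * p^T i 0 <= (B^T *m p^T) i 0.
  by move=> i; have := Hp i; rewrite -trmx_mul !mxE.
have [t [ht hd]] := subinv_col h1 h2 h3 h4.
exists t; split => //; rewrite -det_tr.
by rewrite raddfB /= tr_scalar_mx.
Qed.
End Lsec.

Section SRsec.
Local Open Scope complex_scope.
Variable R : rcfType.
Local Notation C := (R[i]).

Lemma normC_Re (x : C) : `|x| = (complex.Re `|x|)%:C.
Proof. by rewrite normc_def. Qed.

Lemma rts_root n (M : 'M[R]_n) (z : C) :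
  let p := char_poly (map_mx (real_complex R) M) in
  (z \in sval (closed_field_poly_normal p)) = root p z.
Proof.
move=> p; case: (closed_field_poly_normal p) => rs /= E.
rewrite [in RHS]E rootZ ?root_prod_XsubC //.
by rewrite (monicP (char_poly_monic _)) oner_eq0.
Qed.

Lemma SR_ge n (M : 'M[R]_n) (t : R) : 0 <= t -> \det (t%:M - M) = 0 ->
  t <= spectral_radius M.
Proof.
move=> t0 hd; rewrite /spectral_radius.
set rs := sval _.
have rin : t%:C \in rs.
  rewrite /rs rts_root -map_char_poly; apply/rootP.
  by rewrite horner_map char_poly_horner hd rmorph0.
have := @le_bigmax_seq _ _ _ rs 0 (t%:C) xpredT (fun z : C => complex.Re `|z|) rin isT.
by rewrite ger0_norm ?ler0c.
Qed.

Lemma eig_ineq n (M : 'M[R]_n) (z : C) : nnegmx M ->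
  root (char_poly (map_mx (real_complex R) M)) z ->
  exists w : 'rV[R]_n, [/\ nnegmx w, w != 0 &
    forall j, complex.Re `|z| * w 0 j <= (w *m M) 0 j].
Proof.
move=> M0; rewrite -eigenvalue_root_char => /eigenvalueP [v Hv vn0].
exists (\row_j complex.Re `|v 0 j|); split.
- move=> i j; rewrite mxE -ler0c -normC_Re //.
- apply: contra vn0 => /eqP/matrixP H; apply/eqP/matrixP => i j.
  have := H i j; rewrite !mxE (ord1 i) => h.
  by apply/eqP; rewrite -normr_eq0 normC_Re h.
- move=> j; rewrite -lecR rmorphM /= -!normC_Re mxE -normC_Re.
  have := congr1 (fun X : 'rV[C]_n => X 0 j) Hv; rewrite /= !mxE => E.
  rewrite -normrM -E (rmorph_sum (real_complex R)).
  apply: le_trans (ler_norm_sum _ _ _) _; apply: ler_sum => i _.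
  rewrite !mxE normrM rmorphM /= -[Normc.normc _]/(complex.Re `|v 0 i|) -normC_Re.
  by rewrite [`|(M i j)%:C|]ger0_norm // ler0c M0.
Qed.

Lemma SR_le n m (M : 'M[R]_n) (N : 'M[R]_m) : nnegmx M ->
  (forall c (w : 'rV[R]_n), 0 <= c -> nnegmx w -> w != 0 ->
     (forall j, c * w 0 j <= (w *m M) 0 j) ->
     exists q : 'rV[R]_m, [/\ nnegmx q, q != 0 &
        forall j, c * q 0 j <= (q *m N) 0 j]) ->
  nnegmx N -> spectral_radius M <= spectral_radius N.
Proof.
move=> M0 H N0; rewrite {1}/spectral_radius big_seq; apply: bigmax_le.
  by rewrite /spectral_radius; apply: (le_trans (lexx 0)); apply: bigmax_ge_id.
move=> z; rewrite rts_root => rz.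
have [w [w0 wn0 Hw]] := eig_ineq M0 rz.
have c0 : 0 <= complex.Re `|z| by rewrite -ler0c -normC_Re.
have [q [q0 qn0 Hq]] := H _ w c0 w0 wn0 Hw.
have [t [ht hd]] := subinv_row N0 q0 qn0 Hq.
exact: le_trans ht (SR_ge (le_trans c0 ht) hd).
Qed.
End SRsec.

Section Blocks.
Variables (r s : nat).
Hypotheses (hr : (0 < r)%N) (hs : (0 < s)%N).

Lemma blk_inv_lt (g : 'I_(r * s)) : (g %/ s < r)%N.
Proof. by rewrite ltn_divLR // ltn_ord. Qed.

Definition blk_inv (g : 'I_(r * s)) : 'I_r * 'I_s :=
  (Ordinal (blk_inv_lt g), Ordinal (ltn_pmod g hs)).

Lemma blk_idxK (i : 'I_r) (k : 'I_s) : blk_inv (blk_idx i k) = (i, k).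
Proof.
rewrite /blk_inv; congr pair; apply: val_inj => /=.
  by rewrite divnMDl // divn_small // addn0.
by rewrite modnMDl modn_small.
Qed.

Lemma blk_invK (g : 'I_(r * s)) : blk_idx (blk_inv g).1 (blk_inv g).2 = g.
Proof. by apply: val_inj => /=; rewrite -divn_eq. Qed.

Lemma sum_blk (V : nmodType) (F : 'I_(r * s) -> V) :
  \sum_g F g = \sum_(i < r) \sum_(k < s) F (blk_idx i k).
Proof.
rewrite pair_big /=.
rewrite (reindex (fun p : 'I_r * 'I_s => blk_idx p.1 p.2)) //=.
exists blk_inv => [[i k] _|g _]; first by rewrite blk_idxK.
exact: blk_invK.
Qed.

Lemma circ_inj_j (i : 'I_r) : injective (circ_idx i).
Proof.
move=> j1 j2 /(congr1 val) /= /eqP H; apply: val_inj => /=.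
have ir : (i <= r)%N by apply: ltnW.
move: H; rewrite -!addnBA // eqn_modDr !modn_small //= => /eqP //.
Qed.

Lemma circ_inj_i (j : 'I_r) : injective (fun i => circ_idx i j).
Proof.
move=> i1 i2 /(congr1 val) /= H; apply: val_inj => /=.
have i1r : (i1 <= r)%N by apply: ltnW.
have i2r : (i2 <= r)%N by apply: ltnW.
have : ((j + r - i1) + (i1 + i2) == (j + r - i2) + (i1 + i2) %[mod r])%N.
  by rewrite -modnDml H modnDml.
have -> : ((j + r - i1) + (i1 + i2) = (j + r) + i2)%N by lia.
have -> : ((j + r - i2) + (i1 + i2) = (j + r) + i1)%N by lia.
by rewrite eqn_modDl !modn_small // => /eqP.
Qed.

End Blocks.

Section Main.
Variable R : rcfType.
Variables (r s : nat).
Hypotheses (hr : (0 < r)%N) (hs : (0 < s)%N).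

Lemma JJ : Jmat R s *m Jmat R s = 1%:M.
Proof.
apply/matrixP => i k; rewrite !mxE (bigD1 (rev_ord i)) //=.
have hi := ltn_ord i; have hk := ltn_ord k.
rewrite big1 ?addr0; last first.
  move=> j hj; rewrite !mxE.
  have -> : (i + j == s.-1)%N = false.
    apply/eqP => h; move/eqP: hj; apply; apply: val_inj => /=; lia.
  by rewrite mul0r.
rewrite !mxE /=.
have -> : (i + (s - i.+1) == s.-1)%N by apply/eqP; lia.
have -> : ((s - i.+1 + k)%N == s.-1) = (i == k).
  apply/eqP/eqP => [h|->]; last by lia.
  by apply: val_inj => /=; lia.
by rewrite mul1r.
Qed.

Lemma J0 : nnegmx (Jmat R s).
Proof. by move=> i j; rewrite mxE ler0n. Qed.

Definition rowblk (w : 'rV[R]_(r * s)) (i : 'I_r) : 'rV[R]_s :=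
  \row_k w 0 (blk_idx i k).

Lemma rowblk_mul (w : 'rV[R]_(r * s)) (A : 'M[R]_(r * s)) j :
  rowblk (w *m A) j = \sum_i rowblk w i *m blk A i j.
Proof.
apply/matrixP => a l; rewrite !mxE summxE (sum_blk hs); apply: eq_bigr => i _.
by rewrite !mxE; apply: eq_bigr => k _; rewrite !mxE.
Qed.

Lemma nnegE n (x y : 'rV[R]_n) c :
  nnegmx (y - c *: x) <-> forall j, c * x 0 j <= y 0 j.
Proof.
split=> [H j|H i j]; first by have := H 0 j; rewrite !mxE subr_ge0.
by rewrite (ord1 i) !mxE subr_ge0.
Qed.

Lemma nneg_sum n m I (rr : seq I) (F : I -> 'M[R]_(n, m)) :
  (forall i, nnegmx (F i)) -> nnegmx (\sum_(i <- rr) F i).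
Proof. by move=> H a b; rewrite summxE; apply: sumr_ge0 => i _; apply: H. Qed.

Section WithA.
Variables (A : 'M[R]_(r * s)) (d : 'I_r -> bool).
Hypothesis A0 : nnegmx A.
Hypothesis Hd : forall i j : 'I_r, val i != 0%N ->
    blk A i j = (if d i then Jmat R s *m blk A (row0 i) (circ_idx i j)
                 else blk A (row0 i) (circ_idx i j)).
Local Notation i0 := (Ordinal hr).
Local Notation J := (Jmat R s).
Local Notation Bk k := (blk A i0 k).
Local Notation Bs := (\sum_(j < r) blk A i0 j).
Hypothesis HJ : Bs *m J = J *m Bs.

Definition D (i : 'I_r) : 'M[R]_s := if (val i != 0%N) && d i then J else 1%:M.

Lemma blkD i j : blk A i j = D i *m Bk (circ_idx i j).
Proof.
rewrite /D; case: (eqVneq (val i) 0%N) => hi /=.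
  have -> : i = i0 by apply: val_inj.
  have -> : circ_idx i0 j = j.
    by apply: val_inj => /=; rewrite subn0 modnDr modn_small.
  by rewrite mul1mx.
have -> : i0 = row0 i by apply: val_inj.
by rewrite Hd //; case: (d i); rewrite ?mul1mx.
Qed.

Lemma D_J i : D i + D i *m J = 1%:M + J.
Proof. by rewrite /D; case: (_ && _); rewrite ?mul1mx // JJ addrC. Qed.

Lemma D0 i : nnegmx (D i).
Proof. by rewrite /D; case: (_ && _); [apply: J0 | apply: nnegmx1]. Qed.

Lemma qD (q : 'rV[R]_s) i : q *m J = q -> q *m D i = q.
Proof. by rewrite /D; case: (_ && _) => // _; rewrite mulmx1. Qed.

Lemma sum_circ_j i : \sum_j Bk (circ_idx i j) = Bs.
Proof. by rewrite [RHS](reindex_inj (circ_inj_j (i := i))). Qed.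

Lemma sum_circ_i j : \sum_i Bk (circ_idx i j) = Bs.
Proof. by rewrite [RHS](reindex_inj (@circ_inj_i r s hr hs j)). Qed.

Lemma Bk0 k : nnegmx (Bk k).
Proof. by move=> a b; rewrite mxE; apply: A0. Qed.

Lemma Bs0 : nnegmx Bs.
Proof. by apply: nneg_sum => k; apply: Bk0. Qed.

Lemma dir1 c (w : 'rV[R]_(r * s)) : 0 <= c -> nnegmx w -> w != 0 ->
  (forall j, c * w 0 j <= (w *m A) 0 j) ->
  exists q : 'rV[R]_s, [/\ nnegmx q, q != 0 & forall j, c * q 0 j <= (q *m Bs) 0 j].
Proof.
move=> c0 w0 wn0 Hw.
pose W := \sum_i rowblk w i.
pose W' := \sum_i rowblk w i *m D i.
have E1 : \sum_j rowblk (w *m A) j = W' *m Bs.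
  under eq_bigr do rewrite rowblk_mul.
  rewrite exchange_big /W' mulmx_suml; apply: eq_bigr => i _.
  under eq_bigr do rewrite blkD mulmxA.
  by rewrite -mulmx_sumr sum_circ_j.
have X0 : nnegmx (W' *m Bs - c *: W).
  rewrite -E1 => a l; rewrite (ord1 a) !mxE !summxE mulr_sumr -sumrB.
  by apply: sumr_ge0 => j _; rewrite !mxE subr_ge0; have := Hw (blk_idx j l); rewrite mxE.
have E2 : W' + W' *m J = W + W *m J.
  rewrite /W' mulmx_suml -big_split /= /W mulmx_suml -big_split /=.
  apply: eq_bigr => i _; rewrite -mulmxA -mulmxDr D_J.
  by rewrite mulmxDr mulmx1.
pose q := W + W *m J.
have Eq : q *m Bs - c *: q = (W' *m Bs - c *: W) + (W' *m Bs - c *: W) *m J.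
  have e3 : q *m Bs = W' *m Bs + W' *m Bs *m J.
    by rewrite /q -E2 mulmxDl -mulmxA -HJ mulmxA.
  by rewrite e3 mulmxBl -scalemxAl /q scalerDr opprD addrACA.
have W0 : nnegmx W by apply: nneg_sum => i a b; rewrite mxE; apply: w0.
exists q; split.
- by apply: nnegmx_add => //; apply: nnegmx_mul => //; apply: J0.
- apply: contra wn0 => /eqP q0; apply/eqP/matrixP => a g; rewrite (ord1 a) mxE.
  rewrite -(blk_invK hs g); set i := (blk_inv hs g).1; set k := (blk_inv hs g).2.
  apply/le_anti; rewrite w0 andbT.
  have h1 : w 0 (blk_idx i k) <= W 0 k.
    rewrite /W summxE (bigD1 i) //= {1}[rowblk w i 0 k]mxE lerDl.
    by apply: sumr_ge0 => i' _; rewrite mxE; apply: w0.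
  apply: le_trans h1 _.
  have : q 0 k = 0 by rewrite q0 mxE.
  rewrite /q mxE => <-; rewrite lerDl.
  by apply: nnegmx_mul => //; apply: J0.
- apply/nnegE; rewrite Eq; apply: nnegmx_add => //.
  by apply: nnegmx_mul => //; apply: J0.
Qed.

Lemma dir2 c (w : 'rV[R]_s) : 0 <= c -> nnegmx w -> w != 0 ->
  (forall j, c * w 0 j <= (w *m Bs) 0 j) ->
  exists Q : 'rV[R]_(r * s), [/\ nnegmx Q, Q != 0 & forall j, c * Q 0 j <= (Q *m A) 0 j].
Proof.
move=> c0 w0 wn0 /nnegE X0.
pose q := w + w *m J.
have Eq : q *m Bs - c *: q = (w *m Bs - c *: w) + (w *m Bs - c *: w) *m J.
  have e3 : q *m Bs = w *m Bs + w *m Bs *m J.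
    by rewrite /q mulmxDl -mulmxA -HJ mulmxA.
  by rewrite e3 mulmxBl -scalemxAl /q scalerDr opprD addrACA.
have qJ : q *m J = q by rewrite /q mulmxDl -mulmxA JJ mulmx1 addrC.
have q0 : nnegmx q by apply: nnegmx_add => //; apply: nnegmx_mul => //; apply: J0.
have wq : forall k, w 0 k <= q 0 k.
  move=> k; rewrite /q mxE lerDl.
  by apply: nnegmx_mul => //; apply: J0.
pose Q : 'rV[R]_(r * s) := \row_g q 0 (blk_inv hs g).2.
have QE : forall i, rowblk Q i = q.
  by move=> i; apply/matrixP => a k; rewrite (ord1 a) !mxE blk_idxK.
exists Q; split.
- by move=> a g; rewrite mxE.
- apply: contra wn0 => /eqP Q0; apply/eqP/matrixP => a k; rewrite (ord1 a) mxE.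
  apply/le_anti; rewrite w0 andbT; apply: le_trans (wq k) _.
  have := congr1 (fun M : 'rV[R]_(r * s) => M 0 (blk_idx i0 k)) Q0.
  by rewrite /= !mxE blk_idxK /= => ->.
- move=> g; rewrite -(blk_invK hs g); set j := (blk_inv hs g).1; set l := (blk_inv hs g).2.
  have -> : (Q *m A) 0 (blk_idx j l) = rowblk (Q *m A) j 0 l by rewrite /rowblk mxE.
  rewrite rowblk_mul.
  under eq_bigr do rewrite QE blkD mulmxA qD //.
  rewrite -mulmx_sumr sum_circ_i.
  have -> : Q 0 (blk_idx j l) = q 0 l by rewrite mxE blk_idxK.
  have : nnegmx (q *m Bs - c *: q).
    by rewrite Eq; apply: nnegmx_add => //; apply: nnegmx_mul => //; apply: J0.
  by move/nnegE.
Qed.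

End WithA.

End Main.

End Aux.
Import Aux.

Theorem lemma4p3 (R : rcfType) (r s : nat) (hr : (0 < r)%N) (hs : (0 < s)%N)
    (A : 'M[R]_(r * s)) :
  (forall i j, 0 <= A i j) ->
  disoriented_block_circulant A ->
  (\sum_(j < r) blk A (Ordinal hr) j) *m Jmat R s
    = Jmat R s *m (\sum_(j < r) blk A (Ordinal hr) j) ->
  spectral_radius A = spectral_radius (\sum_(j < r) blk A (Ordinal hr) j).
Proof.
move=> A0 [d Hd] HJ.
have A0' : nnegmx A by exact: A0.
have B0 := Bs0 hr A0'.
apply/le_anti/andP; split.
- apply: SR_le A0' _ B0 => c w c0 w0 wn0 Hw.
  by apply: (dir1 hs Hd HJ).
- apply: SR_le B0 _ A0' => c w c0 w0 wn0 Hw.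
  by apply: (dir2 hs Hd HJ).
Qed.
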